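(* Let $L=L_1\oplus L_2$ be a finite-dimensional Lie algebra which is the direct sum of ideals $L_1,L_2$. Then: (i) if there exist Lie algebras $H_1,H_2$ with $H_1^2\cong L_1$ and $H_2^2\cong L_2$, then there is a Lie algebra $H$ with $H^2\cong L$; (ii) if there is a Lie algebra $H$ with $H^2\cong L$ and $Z(L_1)=0$, then there is a Lie algebra $K$ with $K^2\cong L_1$.
   Context: $H^2=[H,H]$ denotes the derived algebra; $Z(L_1)$ is the centre of $L_1$. *)

(* Defs.v *)
From HB Require Import structures.
From mathcomp Require Import all_boot all_order all_algebra.
Set Implicit Arguments. Unset Strict Implicit. Unset Printing Implicit Defensive.
Import GRing.Theory.
Local Open Scope ring_scope.

Record lieAlg (F : fieldType) := LieAlg {
  lie_sort :> vectType F;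
  lie_br : lie_sort -> lie_sort -> lie_sort;
  lie_linl : forall (a : F) (x y z : lie_sort),
      lie_br (a *: x + y) z = a *: lie_br x z + lie_br y z;
  lie_linr : forall (a : F) (x y z : lie_sort),
      lie_br z (a *: x + y) = a *: lie_br z x + lie_br z y;
  lie_alt : forall x : lie_sort, lie_br x x = 0;
  lie_jacobi : forall x y z : lie_sort,
      lie_br x (lie_br y z) + lie_br y (lie_br z x) + lie_br z (lie_br x y) = 0
}.

Arguments lie_br {F L} x y : rename.

Section Defs.
Variable F : fieldType.

Definition lie_ideal (L : lieAlg F) (I : {vspace L}) : Prop :=
  forall x y : L, y \in I -> lie_br x y \in I.

(* the derived algebra L^2 = [L,L]: the span of all brackets, computed as the
   span of brackets of basis vectors (equal by bilinearity) *)
Definition derived (L : lieAlg F) : {vspace L} :=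
  (<<[seq lie_br u v | u <- vbasis (fullv : {vspace L}),
                        v <- vbasis (fullv : {vspace L})]>>)%VS.

Definition derived_iso (L H : lieAlg F) (U : {vspace L}) : Prop :=
  exists f : 'Hom(L, H),
    [/\ (f @: U)%VS = derived H,
        {in U &, injective f} &
        forall x y : L, x \in U -> y \in U -> f (lie_br x y) = lie_br (f x) (f y)].

Definition center_trivial (L : lieAlg F) (U : {vspace L}) : Prop :=
  forall x : L, x \in U -> (forall y : L, y \in U -> lie_br x y = 0) -> x = 0.

End Defs.

(* Main.v *)
Require Import Defs.
From HB Require Import structures.
From mathcomp Require Import all_boot all_order all_algebra.
Set Implicit Arguments. Unset Strict Implicit. Unset Printing Implicit Defensive.
Local Open Scope ring_scope.
Import GRing.Theory.

Section Lie.
Variables (F : fieldType) (L : lieAlg F).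
Implicit Types x y z : L.

Lemma brDl x y z : lie_br (x + y) z = lie_br x z + lie_br y z.
Proof. by have := lie_linl 1 x y z; rewrite !scale1r. Qed.
Lemma brDr x y z : lie_br z (x + y) = lie_br z x + lie_br z y.
Proof. by have := lie_linr 1 x y z; rewrite !scale1r. Qed.
Lemma br0l z : lie_br (0 : L) z = 0.
Proof. have h := brDl 0 0 z; rewrite addr0 in h.
by apply: (@addrI _ (lie_br 0 z)); rewrite addr0 -h. Qed.
Lemma br0r z : lie_br z (0 : L) = 0.
Proof. have h := brDr 0 0 z; rewrite addr0 in h.
by apply: (@addrI _ (lie_br z 0)); rewrite addr0 -h. Qed.
Lemma brZl a x z : lie_br (a *: x) z = a *: lie_br x z.
Proof. by have := lie_linl a x 0 z; rewrite !addr0 br0l addr0. Qed.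
Lemma brZr a x z : lie_br z (a *: x) = a *: lie_br z x.
Proof. by have := lie_linr a x 0 z; rewrite !addr0 br0r addr0. Qed.
Lemma brNl x z : lie_br (- x) z = - lie_br x z.
Proof. by rewrite -scaleN1r brZl scaleN1r. Qed.
Lemma brNr x z : lie_br z (- x) = - lie_br z x.
Proof. by rewrite -scaleN1r brZr scaleN1r. Qed.
Lemma brBl x y z : lie_br (x - y) z = lie_br x z - lie_br y z.
Proof. by rewrite brDl brNl. Qed.
Lemma brBr x y z : lie_br z (x - y) = lie_br z x - lie_br z y.
Proof. by rewrite brDr brNr. Qed.
Lemma brC x y : lie_br y x = - lie_br x y.
Proof.
have := lie_alt (x + y); rewrite brDl !brDr !lie_alt add0r addr0.
by move/eqP; rewrite addrC addr_eq0 => /eqP.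
Qed.
Lemma brsuml I (r : seq I) (P : pred I) (G : I -> L) z :
  lie_br (\sum_(i <- r | P i) G i) z = \sum_(i <- r | P i) lie_br (G i) z.
Proof. by apply: (big_morph (fun x => lie_br x z)); [move=> *; apply: brDl|apply: br0l]. Qed.
Lemma brsumr I (r : seq I) (P : pred I) (G : I -> L) z :
  lie_br z (\sum_(i <- r | P i) G i) = \sum_(i <- r | P i) lie_br z (G i).
Proof. by apply: (big_morph (fun x => lie_br z x)); [move=> *; apply: brDr|apply: br0r]. Qed.

Lemma der_br x y : lie_br x y \in derived L.
Proof.
rewrite (coord_vbasis (memvf x)) (coord_vbasis (memvf y)) brsuml.
apply: rpred_sum => i _; rewrite brZl brsumr; apply: rpredZ.
apply: rpred_sum => j _; rewrite brZr; apply: rpredZ.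
apply: memv_span; apply: allpairs_f; apply: mem_nth; by rewrite size_tuple.
Qed.

Lemma der_min (V : {vspace L}) :
  (forall x y, lie_br x y \in V) -> (derived L <= V)%VS.
Proof.
move=> h; apply/span_subvP => w /allpairsP [[u v] [_ _ ->]] /=; exact: h.
Qed.
End Lie.

Lemma der_map (F : fieldType) (A B : lieAlg F) (phi : A -> B) :
  (forall c x y, phi (c *: x + y) = c *: phi x + phi y) ->
  (forall x y, phi (lie_br x y) = lie_br (phi x) (phi y)) ->
  forall a, a \in derived A -> phi a \in derived B.
Proof.
move=> lin hom a.
set S := [seq lie_br u v | u <- vbasis (fullv : {vspace A}), v <- vbasis (fullv : {vspace A})].
rewrite /derived -/S => /(@coord_span _ _ _ (in_tuple S)) ->.
have p0 : phi 0 = 0.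
  have := lin 1 0 0; rewrite !scale1r !addr0 => h.
  by apply: (@addrI _ (phi 0)); rewrite addr0 -h.
have pD : {morph phi : x y / x + y}.
  by move=> x y; have := lin 1 x y; rewrite !scale1r.
rewrite (big_morph phi pD p0); apply: rpred_sum => i _.
rewrite -[_ *: _]addr0 lin p0 addr0; apply: rpredZ.
have : (in_tuple S)`_i \in S by apply: mem_nth; exact: ltn_ord.
by case/allpairsP => [[u v] [_ _ ->]]; rewrite hom der_br.
Qed.

Lemma part2 (F : fieldType) (L : lieAlg F) (L1 L2 : {vspace L}) :
  lie_ideal L1 -> lie_ideal L2 ->
  (L1 + L2)%VS = fullv -> (L1 :&: L2)%VS = 0%VS ->
  (exists H : lieAlg F, derived_iso H (fullv : {vspace L})) ->
  center_trivial L1 -> exists K : lieAlg F, derived_iso K L1.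
Proof.
move=> iL1 iL2 sum12 cap12 [H [f [imf injf homf]]] ctr.
have cap0 x : x \in L1 -> x \in L2 -> x = 0.
  by move=> a b; apply/eqP; rewrite -memv0 -cap12 memv_cap a b.
have dec z : exists2 z1, z1 \in L1 & exists2 z2, z2 \in L2 & z = z1 + z2.
  by apply/memv_addP; rewrite sum12 memvf.
have surj w : w \in derived H -> exists z, w = f z.
  by rewrite -imf => /memv_imgP [z _ ->]; exists z.
have inj x y : f x = f y -> x = y by move=> h; apply: injf; rewrite ?memvf.
have hom x y : f (lie_br x y) = lie_br (f x) (f y) by apply: homf; rewrite memvf.
have brL21 y w : y \in L2 -> w \in L1 -> lie_br y w = 0.
  move=> Hy Hw; apply: cap0; first exact: iL1.
  by rewrite brC rpredN; apply: iL2.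
set M2 := (f @: L2)%VS.
have idl h y' : y' \in L2 -> lie_br h (f y') \in M2.
  move=> Hy; have [z Ez] := surj _ (der_br h (f y')).
  have [z1 Hz1 [z2 Hz2 Dz]] := dec z.
  suff z10 : z1 = 0 by rewrite Ez Dz z10 add0r memv_img.
  apply: ctr => // w Hw.
  have [u Eu] := surj _ (der_br (f w) h).
  have J := lie_jacobi h (f y') (f w).
  rewrite -hom brL21 // (linear0 f) br0r add0r Eu -hom in J.
  rewrite (brC _ (f w)) Ez -hom -(linearN f) -(linearD f) in J.
  have /eqP := inj _ 0 (etrans J (esym (linear0 f))).
  rewrite addr_eq0 opprK => /eqP E.
  move: E; rewrite Dz brDl (brL21 z2 w) // addr0 => E.
  apply: cap0; first exact: iL1.
  by rewrite -E brC rpredN; apply: iL2.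
have idl' h m : m \in M2 -> lie_br h m \in M2.
  by case/memv_imgP => y' Hy ->; apply: idl.
have idr' h m : m \in M2 -> lie_br m h \in M2.
  by move=> Hm; rewrite brC rpredN; apply: idl'.
pose p : 'Hom(H, H) := (\1 - projv M2)%VF.
have pE x : p x = x - projv M2 x by rewrite /p !lfunE /= !lfunE.
have pM m : m \in M2 -> p m = 0 by move=> Hm; rewrite pE projv_id ?subrr.
have pmem x : x - p x \in M2 by rewrite pE opprB addrC subrK memv_proj.
have keyr x y : p (lie_br x (p y)) = p (lie_br x y).
  have -> : p y = y - (y - p y) by rewrite opprB addrC subrK.
  by rewrite brBr linearB /= (pM _ (idl' _ _ (pmem y))) subr0.
have keyl x y : p (lie_br (p x) y) = p (lie_br x y).
  by rewrite brC linearN /= keyr -linearN /= -brC.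
pose brK (x y : H) := p (lie_br x y).
have K1 : forall (a : F) (x y z : H), brK (a *: x + y) z = a *: brK x z + brK y z.
  by move=> a x y z; rewrite /brK lie_linl linearP.
have K2 : forall (a : F) (x y z : H), brK z (a *: x + y) = a *: brK z x + brK z y.
  by move=> a x y z; rewrite /brK lie_linr linearP.
have K3 : forall x : H, brK x x = 0 by move=> x; rewrite /brK lie_alt linear0.
have K4 : forall x y z : H, brK x (brK y z) + brK y (brK z x) + brK z (brK x y) = 0.
  by move=> x y z; rewrite /brK !keyr -!linearD lie_jacobi linear0.
pose K := LieAlg K1 K2 K3 K4.
exists K; exists (p \o f)%VF; split.
- apply/eqP; rewrite eqEsubv; apply/andP; split.
    apply/subvP => _ /memv_imgP [x Hx ->]; rewrite comp_lfunE.
    apply: (@der_map F H K p).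
    + by move=> c u v; rewrite linearP.
    + by move=> u v; rewrite /= /brK keyr keyl.
    by rewrite -imf memv_img ?memvf.
  apply: der_min => x y /=; rewrite /brK.
  have [z Ez] := surj _ (@der_br F H x y).
  have [z1 Hz1 [z2 Hz2 Dz]] := dec z.
  rewrite Ez Dz linearD /= linearD /= (pM _ (memv_img f Hz2)) addr0.
  by rewrite -comp_lfunE memv_img.
- move=> x y Hx Hy; rewrite !comp_lfunE => E.
  apply/eqP; rewrite -subr_eq0; apply/eqP; apply: cap0; first exact: rpredB.
  have E2 : p (f (x - y)) = 0 by rewrite linearB /= linearB /= E subrr.
  have := pmem (f (x - y)); rewrite E2 subr0 => /memv_imgP [t Ht Et].
  by rewrite (inj _ _ Et).
- move=> x y Hx Hy; rewrite !comp_lfunE /= /brK keyr keyl hom //.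
Qed.

Section Pair.
Variables (F : fieldType) (A B C : vectType F) (g : 'Hom(A, B)) (h : 'Hom(A, C)).
Definition pairf (x : A) : (B * C)%type := (g x, h x).
Fact pairf_lin : linear pairf.
Proof. by move=> a x y; rewrite /pairf !linearP. Qed.
HB.instance Definition _ := GRing.isLinear.Build F A (B * C)%type *:%R pairf pairf_lin.
Lemma pairfE x : linfun pairf x = (g x, h x).
Proof. by rewrite lfunE. Qed.
End Pair.

Section ProdLie.
Variables (F : fieldType) (H1 H2 : lieAlg F).
Definition brP (a b : (H1 * H2)%type) : (H1 * H2)%type :=
  (lie_br a.1 b.1, lie_br a.2 b.2).
Fact brP1 (a : F) (x y z : (H1 * H2)%type) : brP (a *: x + y) z = a *: brP x z + brP y z.
Proof. by rewrite /brP /= !lie_linl. Qed.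
Fact brP2 (a : F) (x y z : (H1 * H2)%type) : brP z (a *: x + y) = a *: brP z x + brP z y.
Proof. by rewrite /brP /= !lie_linr. Qed.
Fact brP3 (x : (H1 * H2)%type) : brP x x = 0.
Proof. by rewrite /brP !lie_alt. Qed.
Fact brP4 (x y z : (H1 * H2)%type) : brP x (brP y z) + brP y (brP z x) + brP z (brP x y) = 0.
Proof. by apply/eqP; rewrite xpair_eqE /= !lie_jacobi !eqxx. Qed.
Definition prodLie := LieAlg brP1 brP2 brP3 brP4.
End ProdLie.

Lemma part1 (F : fieldType) (L : lieAlg F) (L1 L2 : {vspace L}) :
  lie_ideal L1 -> lie_ideal L2 ->
  (L1 + L2)%VS = fullv -> (L1 :&: L2)%VS = 0%VS ->
  ((exists H1 : lieAlg F, derived_iso H1 L1) /\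
    (exists H2 : lieAlg F, derived_iso H2 L2)) ->
     exists H : lieAlg F, derived_iso H (fullv : {vspace L}).
Proof.
move=> iL1 iL2 sum12 cap12 [[H1 [f1 [im1 inj1 hom1]]] [H2 [f2 [im2 inj2 hom2]]]].
have cap21 : (L2 :&: L1)%VS = 0%VS by rewrite capvC.
have cap0 x : x \in L1 -> x \in L2 -> x = 0.
  by move=> a b; apply/eqP; rewrite -memv0 -cap12 memv_cap a b.
pose pi1 := daddv_pi L1 L2; pose pi2 := daddv_pi L2 L1.
have padd x : pi1 x + pi2 x = x.
  by apply: daddv_pi_add => //; rewrite sum12 memvf.
have p11 x : x \in L1 -> pi1 x = x by move=> Hx; apply: daddv_pi_id.
have p22 x : x \in L2 -> pi2 x = x by move=> Hx; apply: daddv_pi_id.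
have p12 x : x \in L1 -> pi2 x = 0.
  by move=> Hx; have h := padd x; rewrite p11 // in h; apply: (@addrI _ x); rewrite h addr0.
have p21 x : x \in L2 -> pi1 x = 0.
  by move=> Hx; have h := padd x; rewrite p22 // in h; apply: (@addIr _ x); rewrite h add0r.
have m1 x : pi1 x \in L1 by apply: memv_pi.
have m2 x : pi2 x \in L2 by apply: memv_pi.
have cross u v : u \in L1 -> v \in L2 -> lie_br u v = 0.
  move=> Hu Hv; apply: cap0; last exact: iL2.
  by rewrite brC rpredN; apply: iL1.
have cross' u v : u \in L2 -> v \in L1 -> lie_br u v = 0.
  by move=> Hu Hv; rewrite brC cross ?oppr0.
have brdec x y : lie_br x y = lie_br (pi1 x) (pi1 y) + lie_br (pi2 x) (pi2 y).
  by rewrite -{1}(padd x) -{1}(padd y) brDl !brDr (cross _ _ (m1 x) (m2 y)) (cross' _ _ (m2 x) (m1 y)) addr0 add0r.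
have pi1br x y : pi1 (lie_br x y) = lie_br (pi1 x) (pi1 y).
  by rewrite brdec linearD /= (p11 _ (iL1 _ _ (m1 y))) (p21 _ (iL2 _ _ (m2 y))) addr0.
have pi2br x y : pi2 (lie_br x y) = lie_br (pi2 x) (pi2 y).
  by rewrite brdec linearD /= (p12 _ (iL1 _ _ (m1 y))) (p22 _ (iL2 _ _ (m2 y))) add0r.
pose f : 'Hom(L, prodLie H1 H2) := linfun (pairf (f1 \o pi1)%VF (f2 \o pi2)%VF).
have fE x : f x = (f1 (pi1 x), f2 (pi2 x)) by rewrite /f pairfE !comp_lfunE.
exists (prodLie H1 H2); exists f; split.
- apply/eqP; rewrite eqEsubv; apply/andP; split.
    apply/subvP => _ /memv_imgP [x _ ->].
    have -> : f x = ((f1 (pi1 x), 0) + (0, f2 (pi2 x)) : prodLie H1 H2).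
      by rewrite fE; apply/eqP; rewrite xpair_eqE /= addr0 add0r !eqxx.
    apply: rpredD.
      apply: (@der_map F H1 (prodLie H1 H2) (fun a => (a, 0))).
      + by move=> c u v; apply/eqP; rewrite xpair_eqE /= scaler0 addr0 !eqxx.
      + by move=> u v; rewrite /= /brP /= br0l.
      by rewrite -im1 memv_img.
    apply: (@der_map F H2 (prodLie H1 H2) (fun a => (0, a))).
    + by move=> c u v; apply/eqP; rewrite xpair_eqE /= scaler0 add0r !eqxx.
    + by move=> u v; rewrite /= /brP /= br0l.
    by rewrite -im2 memv_img.
  apply: der_min => x y /=; rewrite /brP.
  have : lie_br x.1 y.1 \in derived H1 by apply: der_br.
  rewrite -im1 => /memv_imgP [u1 Hu1 ->].
  have : lie_br x.2 y.2 \in derived H2 by apply: der_br.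
  rewrite -im2 => /memv_imgP [u2 Hu2 ->].
  have -> : (f1 u1, f2 u2) = f (u1 + u2).
    by rewrite fE !linearD /= (p11 _ Hu1) (p21 _ Hu2) (p12 _ Hu1) (p22 _ Hu2) ?linear0 ?addr0 ?add0r.
  by rewrite memv_img ?memvf.
- move=> x y _ _; rewrite !fE => /eqP; rewrite xpair_eqE => /andP [/eqP e1 /eqP e2].
  rewrite -(padd x) -(padd y) (inj1 _ _ (m1 x) (m1 y) e1) (inj2 _ _ (m2 x) (m2 y) e2) //.
- move=> x y _ _; rewrite !fE /= /brP /= pi1br pi2br hom1 ?hom2 //.
Qed.

Theorem lemma2p7 (F : fieldType) (L : lieAlg F) (L1 L2 : {vspace L}) :
  lie_ideal L1 -> lie_ideal L2 ->
  (L1 + L2)%VS = fullv -> (L1 :&: L2)%VS = 0%VS ->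
  (((exists H1 : lieAlg F, derived_iso H1 L1) /\
    (exists H2 : lieAlg F, derived_iso H2 L2)) ->
     exists H : lieAlg F, derived_iso H (fullv : {vspace L}))
  /\
  ((exists H : lieAlg F, derived_iso H (fullv : {vspace L})) ->
     center_trivial L1 ->
     exists K : lieAlg F, derived_iso K L1).
Proof.
move=> i1 i2 s c; split; [exact: (part1 i1 i2 s c) | exact: (part2 i1 i2 s c)].
Qed.
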